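(* Let $A=\mathbb{F}_2(\mathbb{Z}_3)$ with calculus as in the context. Then the element $$g_B=(1+y)\,\omega^1\otimes\omega^1+(1+x+y)(\omega^1\otimes\omega^2+\omega^2\otimes\omega^1)+(1+x)\,\omega^2\otimes\omega^2$$ is the unique invertible, central, quantum symmetric metric. It admits exactly four QLCs; three of them are flat and the fourth has curvature $R_\nabla\eta=\mathrm{Vol}\otimes\eta$ for all $\eta\in\Omega^1$. The quantum dimension $(\ ,\ )(g_B)$ is $0$, and for each of the four QLCs the Laplacian $\Delta$ is identically zero.
   Context: Algebra B: $A$ is the commutative algebra over $\mathbb{F}_2$ with basis $1,x,y$ and $x^2=x$, $y^2=y$, $xy=0$ (the functions on $\mathbb{Z}_3$). $\Omega^1$ is the universal calculus, free as a left module on $\omega^1=\mathrm{d}x$, $\omega^2=\mathrm{d}y$, with $\omega^1x=(1+x)\omega^1$, $\omega^1y=x\omega^2$, $\omega^2x=y\omega^1$, $\omega^2y=(1+y)\omega^2$. $\Omega^2=A\,\mathrm{Vol}$ free of rank one with central basis $\mathrm{Vol}$, $\omega^1\wedge\omega^1=(1+x)\mathrm{Vol}$, $\omega^1\wedge\omega^2=\omega^2\wedge\omega^1=(x+y)\mathrm{Vol}$, $\omega^2\wedge\omega^2=(1+y)\mathrm{Vol}$, $\mathrm{d}\omega^i=0$. Definitions: $g\in\Omega^1\otimes_A\Omega^1$ is central if $ag=ga$ for all $a$; quantum symmetric if $\wedge(g)=0$; an invertible metric if there is a bimodule map $(\ ,\ ):\Omega^1\otimes_A\Omega^1\to A$ with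 $((\eta,\ )\otimes\mathrm{id})g=\eta=(\mathrm{id}\otimes(\ ,\eta))g$ for all $\eta$. A QLC for $g$ is a bimodule connection ($\nabla(a\omega)=a\nabla\omega+\mathrm{d}a\otimes\omega$, $\nabla(\omega a)=(\nabla\omega)a+\sigma(\omega\otimes\mathrm{d}a)$ for a bimodule map $\sigma$) which is torsion free ($\wedge\nabla=\mathrm{d}$ on $\Omega^1$) and metric compatible ($(\nabla\otimes\mathrm{id})g+(\sigma\otimes\mathrm{id})(\mathrm{id}\otimes\nabla)g=0$). Curvature $R_\nabla=(\mathrm{d}\otimes\mathrm{id}-\mathrm{id}\wedge\nabla)\nabla$; flat means $R_\nabla=0$. Laplacian $\Delta=(\ ,\ )\nabla\mathrm{d}:A\to A$; quantum dimension $(\ ,\ )(g)$. *)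

(* Defs.v *)
From mathcomp Require Import all_boot.
Set Implicit Arguments.
Unset Strict Implicit.
Unset Printing Implicit Defensive.

(* The algebra A = F_2(Z_3): basis 1, x, y with x^2 = x, y^2 = y, xy = 0.   *)
(* (c0, c1, c2) : Alg  stands for  c0*1 + c1*x + c2*y,  c_i in F_2 = bool.  *)
Definition Alg := (bool * bool * bool)%type.

Definition aadd (a b : Alg) : Alg :=
  let '(a0, a1, a2) := a in let '(b0, b1, b2) := b in
  (xorb a0 b0, xorb a1 b1, xorb a2 b2).

Definition amul (a b : Alg) : Alg :=
  let '(a0, a1, a2) := a in let '(b0, b1, b2) := b in
  (a0 && b0,
   xorb (xorb (a0 && b1) (a1 && b0)) (a1 && b1),
   xorb (xorb (a0 && b2) (a2 && b0)) (a2 && b2)).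

Definition azero : Alg := (false, false, false).
Definition aone  : Alg := (true, false, false).
Definition ax    : Alg := (false, true, false).
Definition ay    : Alg := (false, false, true).
Definition cst (b : bool) : Alg := (b, false, false).

(* Omega^1: free left A-module on om1 = dx, om2 = dy.                       *)
(* (e1, e2) : Om1 stands for e1 om1 + e2 om2.                               *)
Definition Om1 := (Alg * Alg)%type.
Definition oadd (u v : Om1) : Om1 := (aadd u.1 v.1, aadd u.2 v.2).
Definition oscal (a : Alg) (u : Om1) : Om1 := (amul a u.1, amul a u.2).
Definition ozero : Om1 := (azero, azero).
Definition om1 : Om1 := (aone, azero).
Definition om2 : Om1 := (azero, aone).

(* right action on the generators, from
   om1 x = (1+x) om1, om1 y = x om2, om2 x = y om1, om2 y = (1+y) om2 *)
Definition rom1 (a : Alg) : Om1 :=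
  let '(c0, c1, c2) := a in
  (aadd (cst c0) (amul (cst c1) (aadd aone ax)), amul (cst c2) ax).
Definition rom2 (a : Alg) : Om1 :=
  let '(c0, c1, c2) := a in
  (amul (cst c1) ay, aadd (cst c0) (amul (cst c2) (aadd aone ay))).
Definition ormul (u : Om1) (a : Alg) : Om1 :=
  oadd (oscal u.1 (rom1 a)) (oscal u.2 (rom2 a)).

Definition dA (a : Alg) : Om1 := let '(_, c1, c2) := a in (cst c1, cst c2).

(* Omega^1 (x)_A Omega^1: free left module on om_i (x) om_j.                *)
(* (p1, p2) : T2 stands for p1 (x) om1 + p2 (x) om2  (p_j in Omega^1),      *)
(* i.e. the coefficient of om_i (x) om_j is the i-th component of p_j.      *)
Definition T2 := (Om1 * Om1)%type.
Definition t2add (s t : T2) : T2 := (oadd s.1 t.1, oadd s.2 t.2).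
Definition t2scal (a : Alg) (t : T2) : T2 := (oscal a t.1, oscal a t.2).
Definition t2zero : T2 := (ozero, ozero).
(* xi (x) (z1 om1 + z2 om2) = (xi z1) (x) om1 + (xi z2) (x) om2 *)
Definition tens (xi zeta : Om1) : T2 := (ormul xi zeta.1, ormul xi zeta.2).
Definition t2rmul (t : T2) (a : Alg) : T2 :=
  t2add (tens t.1 (rom1 a)) (tens t.2 (rom2 a)).

(* Omega^1 (x) Omega^1 (x) Omega^1: (t1, t2) stands for
   t1 (x) om1 + t2 (x) om2 with t_k in Omega^1 (x) Omega^1. *)
Definition T3 := (T2 * T2)%type.
Definition t3add (s t : T3) : T3 := (t2add s.1 t.1, t2add s.2 t.2).
Definition t3zero : T3 := (t2zero, t2zero).
Definition tens3 (xi : Om1) (t : T2) : T3 := (tens xi t.1, tens xi t.2).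
Definition sigma_id (s : T2 -> T2) (t : T3) : T3 := (s t.1, s t.2).

(* Omega^2 = A Vol (Vol central); a : Om2 stands for a Vol.                 *)
(* om1^om1 = (1+x)Vol, om1^om2 = om2^om1 = (x+y)Vol, om2^om2 = (1+y)Vol.    *)
Definition Om2 := Alg.
Definition w11 : Alg := aadd aone ax.
Definition w12 : Alg := aadd ax ay.
Definition w21 : Alg := aadd ax ay.
Definition w22 : Alg := aadd aone ay.
Definition wedge_om1 (xi : Om1) : Om2 := aadd (amul xi.1 w11) (amul xi.2 w21).
Definition wedge_om2 (xi : Om1) : Om2 := aadd (amul xi.1 w12) (amul xi.2 w22).
Definition wedge (t : T2) : Om2 := aadd (wedge_om1 t.1) (wedge_om2 t.2).
(* d : Omega^1 -> Omega^2, d(e1 om1 + e2 om2) = de1 ^ om1 + de2 ^ om2 (d om_i = 0) *)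
Definition dOm1 (u : Om1) : Om2 := wedge (dA u.1, dA u.2).

(* Omega^2 (x)_A Omega^1: (c1, c2) stands for (c1 Vol) (x) om1 + (c2 Vol) (x) om2
   = Vol (x) (c1 om1 + c2 om2)  (Vol central). *)
Definition Om2Om1 := Om1.
Definition Vol_tens (eta : Om1) : Om2Om1 := eta.
Definition wedgeT (xi : Om1) (t : T2) : Om2Om1 :=
  (wedge (tens xi t.1), wedge (tens xi t.2)).

Definition central (g : T2) : Prop := forall a : Alg, t2scal a g = t2rmul g a.
Definition quantum_symmetric (g : T2) : Prop := wedge g = azero.

Definition bimod_pairing (pr : T2 -> Alg) : Prop :=
  [/\ forall s t, pr (t2add s t) = aadd (pr s) (pr t),
      forall a t, pr (t2scal a t) = amul a (pr t)
    & forall t a, pr (t2rmul t a) = amul (pr t) a].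

(* ((eta, ) (x) id) g = eta = (id (x) ( , eta)) g, with g = g1 (x) om1 + g2 (x) om2 *)
Definition metric_inverse (g : T2) (pr : T2 -> Alg) : Prop :=
  [/\ bimod_pairing pr,
      forall eta : Om1, (pr (tens eta g.1), pr (tens eta g.2)) = eta
    & forall eta : Om1,
        oadd (ormul g.1 (pr (tens om1 eta))) (ormul g.2 (pr (tens om2 eta))) = eta].

Definition invertible_metric (g : T2) : Prop := exists pr, metric_inverse g pr.

Definition bimod_map (s : T2 -> T2) : Prop :=
  [/\ forall u v, s (t2add u v) = t2add (s u) (s v),
      forall a t, s (t2scal a t) = t2scal a (s t)
    & forall t a, s (t2rmul t a) = t2rmul (s t) a].

Definition left_connection (n : Om1 -> T2) : Prop :=
  (forall u v, n (oadd u v) = t2add (n u) (n v)) /\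
  (forall (a : Alg) (u : Om1), n (oscal a u) = t2add (t2scal a (n u)) (tens (dA a) u)).

Definition right_leibniz (n : Om1 -> T2) (s : T2 -> T2) : Prop :=
  forall (u : Om1) (a : Alg), n (ormul u a) = t2add (t2rmul (n u) a) (s (tens u (dA a))).

Definition torsion_free (n : Om1 -> T2) : Prop := forall u, wedge (n u) = dOm1 u.

(* (nabla (x) id) g + (sigma (x) id)(id (x) nabla) g = 0, evaluated on the
   representative g = g1 (x) om1 + g2 (x) om2 *)
Definition metric_compatible (g : T2) (n : Om1 -> T2) (s : T2 -> T2) : Prop :=
  t3add (n g.1, n g.2)
        (t3add (sigma_id s (tens3 g.1 (n om1))) (sigma_id s (tens3 g.2 (n om2))))
  = t3zero.

Definition QLC (g : T2) (n : Om1 -> T2) : Prop :=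
  left_connection n /\
  exists s : T2 -> T2,
    [/\ bimod_map s, right_leibniz n s, torsion_free n & metric_compatible g n s].

(* R_nabla = (d (x) id - id ^ nabla) nabla (in characteristic 2, - = +),
   evaluated on the representative nabla(eta) = p1 (x) om1 + p2 (x) om2 *)
Definition curvature (n : Om1 -> T2) (eta : Om1) : Om2Om1 :=
  let t := n eta in
  oadd (dOm1 t.1, dOm1 t.2) (oadd (wedgeT t.1 (n om1)) (wedgeT t.2 (n om2))).

Definition flat (n : Om1 -> T2) : Prop := forall eta, curvature n eta = ozero.

Definition laplacian (pr : T2 -> Alg) (n : Om1 -> T2) (a : Alg) : Alg := pr (n (dA a)).

Definition same_conn (n m : Om1 -> T2) : Prop := forall eta, n eta = m eta.

Definition gB : T2 :=
  ((aadd aone ay, aadd (aadd aone ax) ay),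
   (aadd (aadd aone ax) ay, aadd aone ax)).

(* Main.v *)
Require Import Defs.
From mathcomp Require Import all_boot.
From Stdlib Require Import Btauto.
Set Implicit Arguments.
Unset Strict Implicit.

Lemma pair_eq A B (a c : A) (b d : B) : a = c -> b = d -> (a,b) = (c,d).
Proof. by move=> -> ->. Qed.
Ltac bsplit := repeat match goal with |- (_,_) = (_,_) => apply: pair_eq end.
Ltac dvars := intros; repeat match goal with
 | x : ?T |- _ => let T' := eval hnf in T in match T' with prod _ _ => destruct x end
 end.
Ltac bsolve := dvars; cbv -[xorb andb orb negb]; bsplit; btauto.

Definition allA : seq Alg := [:: (false,false,false); (false,false,true);
  (false,true,false); (false,true,true); (true,false,false); (true,false,true);
  (true,true,false); (true,true,true)].
Fixpoint lall {T} (p : T -> bool) (s : seq T) : bool :=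
  if s is x :: s' then (if p x then lall p s' else false) else true.
Lemma lallE T p s : @lall T p s = all p s.
Proof. by elim: s => //= x s ->; case: (p x). Qed.
Definition fA (P : Alg -> bool) := lall P allA.
Lemma fAP {P : Alg -> bool} : fA P -> forall a, P a.
Proof. rewrite /fA lallE => /allP H [[a b] c]; apply: H; by case: a; case: b; case: c. Qed.
Lemma fAI {P : Alg -> bool} : (forall a, P a) -> fA P.
Proof. by rewrite /fA lallE => H; apply/allP => a _; apply: H. Qed.
Definition fO (P : Om1 -> bool) := fA (fun a => fA (fun b => P (a,b))).
Lemma fOP {P : Om1 -> bool} : fO P -> forall u, P u.
Proof. move=> H [a b]; move: (fAP H a) => /= H'; exact: (fAP H' b). Qed.
Lemma fOI {P : Om1 -> bool} : (forall u, P u) -> fO P.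
Proof. by move=> H; apply: fAI => a; apply: fAI => b; apply: H. Qed.
Definition fT (P : T2 -> bool) := fO (fun a => fO (fun b => P (a,b))).
Lemma fTP {P : T2 -> bool} : fT P -> forall u, P u.
Proof. move=> H [a b]; move: (fOP H a) => /= H'; exact: (fOP H' b). Qed.
Definition fA4 (P : Alg -> Alg -> Alg -> Alg -> bool) :=
  fA (fun a => fA (fun b => fA (fun c => fA (fun d => P a b c d)))).
Lemma fA4P {P : Alg -> Alg -> Alg -> Alg -> bool} : fA4 P -> forall a b c d, P a b c d.
Proof. move=> H a b c d; move: (fAP H a) => /= /fAP /(_ b) /= /fAP /(_ c) /= /fAP /(_ d). done. Qed.

Definition eqA (a b : Alg) : bool :=
  let '(a0,a1,a2) := a in let '(b0,b1,b2) := b in Bool.eqb a0 b0 && Bool.eqb a1 b1 && Bool.eqb a2 b2.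
Lemma eqAP a b : eqA a b -> a = b.
Proof.
case: a => [[a0 a1] a2]; case: b => [[b0 b1] b2] /=.
by move=> /andP [/andP [/Bool.eqb_prop -> /Bool.eqb_prop ->] /Bool.eqb_prop ->].
Qed.
Lemma eqA_refl a : eqA a a.
Proof. by case: a => [[[] []] []]. Qed.
Definition eqO (u v : Om1) := eqA u.1 v.1 && eqA u.2 v.2.
Lemma eqOP u v : eqO u v -> u = v.
Proof. case: u; case: v => ? ? ? ? /andP [/eqAP /= -> /eqAP /= ->]. by []. Qed.
Lemma eqO_refl u : eqO u u.
Proof. by rewrite /eqO !eqA_refl. Qed.
Definition eqT (u v : T2) := eqO u.1 v.1 && eqO u.2 v.2.
Lemma eqTP u v : eqT u v -> u = v.
Proof. case: u; case: v => ? ? ? ? /andP [/eqOP /= -> /eqOP /= ->]. by []. Qed.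
Lemma eqT_refl u : eqT u u.
Proof. by rewrite /eqT !eqO_refl. Qed.
Definition eqT3 (u v : T3) := eqT u.1 v.1 && eqT u.2 v.2.
Lemma eqT3P u v : eqT3 u v -> u = v.
Proof. case: u; case: v => ? ? ? ? /andP [/eqTP /= -> /eqTP /= ->]. by []. Qed.
Lemma eqT3_refl u : eqT3 u u.
Proof. by rewrite /eqT3 !eqT_refl. Qed.

Definition E11 : T2 := (om1, ozero).
Definition E12 : T2 := (ozero, om1).
Definition E21 : T2 := (om2, ozero).
Definition E22 : T2 := (ozero, om2).

Lemma t2_decomp t : t = t2add (t2add (t2add (t2scal t.1.1 E11) (t2scal t.2.1 E12))
                          (t2scal t.1.2 E21)) (t2scal t.2.2 E22).
Proof. move: t; bsolve. Qed.
Lemma o_decomp u : u = oadd (oscal u.1 om1) (oscal u.2 om2).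
Proof. move: u; bsolve. Qed.
Lemma t2add_cancel x y : t2add x (t2add x y) = y.
Proof. move: x y; bsolve. Qed.

Definition prof (P11 P12 P21 P22 : Alg) (t : T2) : Alg :=
  aadd (aadd (aadd (amul t.1.1 P11) (amul t.2.1 P12)) (amul t.1.2 P21)) (amul t.2.2 P22).
Definition sig (S11 S12 S21 S22 : T2) (t : T2) : T2 :=
  t2add (t2add (t2add (t2scal t.1.1 S11) (t2scal t.2.1 S12)) (t2scal t.1.2 S21)) (t2scal t.2.2 S22).
Definition connof (N1 N2 : T2) (u : Om1) : T2 :=
  t2add (t2add (t2scal u.1 N1) (tens (dA u.1) om1)) (t2add (t2scal u.2 N2) (tens (dA u.2) om2)).

Lemma pr_decomp pr : bimod_pairing pr -> forall t, pr t = prof (pr E11) (pr E12) (pr E21) (pr E22) t.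
Proof. case=> Hadd Hl _ t. by rewrite {1}(t2_decomp t) !Hadd !Hl. Qed.
Lemma sig_decomp s : bimod_map s -> forall t, s t = sig (s E11) (s E12) (s E21) (s E22) t.
Proof. case=> Hadd Hl _ t. by rewrite {1}(t2_decomp t) !Hadd !Hl. Qed.
Lemma conn_decomp n : left_connection n -> forall u, n u = connof (n om1) (n om2) u.
Proof. case=> Hadd Hl u. by rewrite {1}(o_decomp u) Hadd !Hl. Qed.

Lemma sig_add S11 S12 S21 S22 u v : sig S11 S12 S21 S22 (t2add u v) = t2add (sig S11 S12 S21 S22 u) (sig S11 S12 S21 S22 v).
Proof. move: S11 S12 S21 S22 u v. bsolve. Qed.
Lemma sig_scal S11 S12 S21 S22 a u : sig S11 S12 S21 S22 (t2scal a u) = t2scal a (sig S11 S12 S21 S22 u).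
Proof. move: S11 S12 S21 S22 a u. bsolve. Qed.
Lemma prof_add P11 P12 P21 P22 u v : prof P11 P12 P21 P22 (t2add u v) = aadd (prof P11 P12 P21 P22 u) (prof P11 P12 P21 P22 v).
Proof. move: P11 P12 P21 P22 u v. bsolve. Qed.
Lemma prof_scal P11 P12 P21 P22 a u : prof P11 P12 P21 P22 (t2scal a u) = amul a (prof P11 P12 P21 P22 u).
Proof. move: P11 P12 P21 P22 a u. bsolve. Qed.
Lemma connof_add N1 N2 u v : connof N1 N2 (oadd u v) = t2add (connof N1 N2 u) (connof N1 N2 v).
Proof. move: N1 N2 u v. bsolve. Qed.
Lemma connof_scal N1 N2 a u : connof N1 N2 (oscal a u) = t2add (t2scal a (connof N1 N2 u)) (tens (dA a) u).
Proof. move: N1 N2 a u. bsolve. Qed.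

Definition N1_1 : T2 := (((true,true,false), (false,true,true)), ((true,false,true), (true,true,false))).
Definition N2_1 : T2 := (((true,false,true), (true,true,false)), ((false,true,true), (true,false,true))).
Definition N1_2 : T2 := (((true,true,false), (true,false,false)), ((true,true,true), (true,false,false))).
Definition N2_2 : T2 := (((true,false,false), (true,true,false)), ((false,false,false), (true,true,true))).
Definition N1_3 : T2 := (((true,true,true), (false,false,false)), ((true,false,true), (true,false,false))).
Definition N2_3 : T2 := (((true,false,false), (true,true,true)), ((true,false,false), (true,false,true))).
Definition N1_4 : T2 := (((true,true,true), (true,true,true)), ((true,true,true), (true,true,false))).
Definition N2_4 : T2 := (((true,false,true), (true,true,true)), ((true,true,true), (true,true,true))).

Definition S11 N1 N2 := t2add (t2rmul N1 ax) (connof N1 N2 (ormul om1 ax)).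
Definition S12 N1 N2 := t2add (t2rmul N1 ay) (connof N1 N2 (ormul om1 ay)).
Definition S21 N1 N2 := t2add (t2rmul N2 ax) (connof N1 N2 (ormul om2 ax)).
Definition S22 N1 N2 := t2add (t2rmul N2 ay) (connof N1 N2 (ormul om2 ay)).
Definition nsig N1 N2 := sig (S11 N1 N2) (S12 N1 N2) (S21 N1 N2) (S22 N1 N2).

Definition mexpr (g : T2) (n : Om1 -> T2) (s : T2 -> T2) : T3 :=
  t3add (n g.1, n g.2)
        (t3add (sigma_id s (tens3 g.1 (n om1))) (sigma_id s (tens3 g.2 (n om2)))).
Definition mc_b g N1 N2 := eqT3 (mexpr g (connof N1 N2) (nsig N1 N2)) t3zero.

Definition mfast (N1 N2 : T2) : T3 :=
  let '(((x0,x1,x2),(x3,x4,x5)),((x6,x7,x8),(x9,x10,x11))) := N1 in let '(((y0,y1,y2),(y3,y4,y5)),((y6,y7,y8),(y9,y10,y11))) := N2 in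
  ((((xorb (xorb (xorb (xorb (xorb (xorb (xorb (xorb (xorb (x0) x1) y1) (x0 && x1)) (x0 && y0)) (x0 && y1)) (x3 && y0)) (x5 && y0)) (y0 && y3)) (y0 && y5), xorb (xorb (xorb (xorb (xorb (xorb (xorb (xorb (y1) (x0 && y0)) (x0 && y1)) (x2 && y0)) (x2 && y1)) (x3 && y1)) (x5 && y1)) (y0 && y3)) (y0 && y5), xorb (xorb (xorb (xorb (xorb (xorb (xorb (xorb (x0) x1) (x0 && x1)) (x2 && y0)) (x2 && y1)) (x3 && y0)) (x3 && y1)) (x5 && y0)) (x5 && y1)), (xorb (xorb (xorb (xorb (xorb (xorb (xorb (xorb (xorb (xorb (xorb (xorb (xorb (xorb (xorb (xorb (xorb (xorb (xorb (xorb (true) x0) x2) x3) y0) y2) (x0 && x9)) (x0 && y3)) (x0 && y9)) (x1 && x9)) (x2 && y3)) (x2 && y9)) (x3 && y3)) (x5 && y3)) (x9 && y0)) (x9 && y1)) (y0 && y3)) (y0 && y9)) (y2 && y3)) (y2 && y9)) (y3 && y5), xorb (xorb (xorb (xorb (xorb (xorb (xorb (xorb (xorb (xorb (xorb (xorb (xorb (xorb (xorb (xorb (xorb (xorb (xorb (xorb (xorb (xorb (xorb (xorb (x0) x4) y0) y2) (x0 && x3)) (x0 && x4)) (x0 && x6)) (x0 && x7)) (x0 && x10)) (x0 && y3)) (x0 && y9)) (x1 && x9)) (x2 && y4)) (x2 && y6)) (x2 && y7)) (x2 && y10)) (x3 && y4)) (x5 && y4)) (x9 && y0)) (x9 &&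 y1)) (y0 && y3)) (y0 && y9)) (y2 && y3)) (y2 && y9)) (y3 && y5), xorb (xorb (xorb (xorb (xorb (xorb (xorb (xorb (xorb (xorb (xorb (xorb (xorb (xorb (xorb (xorb (xorb (xorb (xorb (xorb (x0) x2) x3) y2) (x0 && x9)) (x0 && y3)) (x0 && y9)) (x1 && x9)) (x2 && y3)) (x2 && y9)) (x3 && y0)) (x3 && y3)) (x5 && y0)) (x5 && y3)) (x9 && y0)) (x9 && y1)) (y0 && y5)) (y0 && y9)) (y2 && y3)) (y2 && y9)) (y3 && y5))), ((xorb (xorb (xorb (xorb (xorb (xorb (xorb (xorb (xorb (xorb (xorb (xorb (xorb (xorb (xorb (xorb (xorb (xorb (xorb (xorb (xorb (xorb (true) x3) x4) x6) y3) y4) y6) (x0 && x3)) (x0 && x4)) (x0 && x6)) (x0 && y3)) (x0 && y4)) (x1 && x6)) (x3 && x6)) (x3 && y0)) (x4 && x6)) (x5 && y0)) (x6 && y0)) (x6 && y1)) (x6 && y3)) (x6 && y4)) (y0 && y3)) (y0 && y5), xorb (xorb (xorb (xorb (xorb (xorb (xorb (xorb (xorb (xorb (xorb (xorb (xorb (xorb (xorb (xorb (xorb (xorb (xorb (xorb (xorb (xorb (x4) x7) y3) y4) y6) (x0 && x3)) (x0 && x4)) (x0 && x6)) (x0 && y3)) (x0 && y4)) (x1 && x6)) (x3 && x7)) (x3 && y0)) (x3 && y6)) (x3 && y7)) (x4 && x6)) (x5 && y0)) (x6 && y0)) (x6 && y1)) (x6 && y3)) (x6 && y4)) (y0 &&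 y3)) (y0 && y5), xorb (xorb (xorb (xorb (xorb (xorb (xorb (xorb (xorb (xorb (xorb (xorb (xorb (xorb (xorb (xorb (xorb (xorb (xorb (xorb (xorb (xorb (xorb (xorb (x3) x4) x6) y6) (x0 && x3)) (x0 && x4)) (x0 && x6)) (x0 && y3)) (x1 && x6)) (x2 && y4)) (x3 && x6)) (x3 && y0)) (x3 && y4)) (x4 && x6)) (x5 && y0)) (x5 && y4)) (x6 && y3)) (x8 && y0)) (x8 && y1)) (x8 && y4)) (y0 && y5)) (y2 && y3)) (y3 && y5)) (y3 && y6)) (y3 && y8)), (xorb (xorb (xorb (xorb (xorb (xorb (xorb (xorb (xorb (xorb (xorb (xorb (xorb (xorb (true) x3) x5) x9) y3) y5) y9) (x0 && x9)) (x1 && x9)) (x3 && y9)) (x5 && y9)) (x9 && y0)) (x9 && y1)) (y3 && y9)) (y5 && y9), xorb (xorb (xorb (xorb (xorb (xorb (xorb (xorb (xorb (xorb (xorb (xorb (xorb (xorb (xorb (xorb (x3) x10) y3) y5) y9) (x0 && x9)) (x1 && x9)) (x3 && x6)) (x3 && x7)) (x3 && y10)) (x5 && y6)) (x5 && y7)) (x5 && y10)) (x9 && y0)) (x9 && y1)) (y3 && y9)) (y5 && y9), xorb (xorb (xorb (xorb (xorb (xorb (xorb (xorb (xorb (xorb (xorb (xorb (xorb (xorb (x3) x5) x9) y5) y9) (x0 && x9)) (x1 && x9)) (x3 && y9)) (x5 && y9)) (x9 && y4)) (x11 && y0)) (x11 && y1)) (x11 && y4)) (y3 && y11)) (y5 &&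 y9)))), (((xorb (xorb (xorb (xorb (xorb (xorb (xorb (xorb (xorb (xorb (xorb (xorb (xorb (xorb (true) x0) x6) x7) y0) y6) y7) (x0 && x6)) (x0 && x7)) (x0 && y6)) (x0 && y7)) (x9 && y0)) (x11 && y0)) (y0 && y9)) (y0 && y11), xorb (xorb (xorb (xorb (xorb (xorb (xorb (xorb (xorb (xorb (xorb (xorb (xorb (xorb (x0) x7) y0) y6) y7) (x0 && x7)) (x0 && y6)) (x0 && y7)) (x1 && x6)) (x8 && y0)) (x8 && y1)) (x9 && y1)) (x11 && y1)) (y0 && y9)) (y0 && y11), xorb (xorb (xorb (xorb (xorb (xorb (xorb (xorb (xorb (xorb (xorb (xorb (xorb (xorb (xorb (xorb (x0) x6) x7) y2) y6) (x0 && x6)) (x0 && x7)) (x2 && y6)) (x2 && y7)) (x3 && y7)) (x5 && y7)) (x9 && y0)) (x11 && y0)) (y0 && y9)) (y0 && y11)) (y3 && y6)) (y5 && y6)), (xorb (xorb (xorb (xorb (xorb (xorb (xorb (xorb (xorb (xorb (xorb (xorb (xorb (xorb (xorb (xorb (xorb (xorb (xorb (xorb (xorb (xorb (true) x3) x6) x8) y3) y6) y8) (x6 && x9)) (x6 && y3)) (x6 && y9)) (x7 && x9)) (x8 && y3)) (x8 && y9)) (x9 && y3)) (x9 && y6)) (x9 && y7)) (x11 && y3)) (y3 && y6)) (y3 && y8)) (y3 && y9)) (y3 && y11)) (y6 && y9)) (y8 && y9), xorb (xorb (xorb (xorb (xorb (xorb (xorb (xorb (xorb (xorb (xorb (xorb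 (xorb (xorb (xorb (xorb (xorb (xorb (xorb (xorb (xorb (xorb (xorb (xorb (x3) y3) y6) y8) (x3 && x6)) (x4 && x6)) (x6 && x7)) (x6 && x10)) (x6 && y3)) (x6 && y9)) (x7 && x9)) (x8 && y4)) (x8 && y6)) (x8 && y7)) (x8 && y10)) (x9 && y4)) (x9 && y6)) (x9 && y7)) (x11 && y4)) (y3 && y6)) (y3 && y8)) (y3 && y9)) (y3 && y11)) (y6 && y9)) (y8 && y9), xorb (xorb (xorb (xorb (xorb (xorb (xorb (xorb (xorb (xorb (xorb (xorb (xorb (xorb (xorb (xorb (xorb (xorb (xorb (xorb (xorb (xorb (x3) x6) x8) y5) y8) (x3 && y6)) (x5 && y6)) (x6 && x9)) (x6 && y3)) (x6 && y9)) (x7 && x9)) (x8 && y3)) (x8 && y9)) (x9 && y3)) (x9 && y6)) (x9 && y7)) (x11 && y3)) (y3 && y8)) (y3 && y9)) (y3 && y11)) (y5 && y6)) (y6 && y9)) (y8 && y9))), ((xorb (xorb (xorb (xorb (xorb (xorb (xorb (xorb (xorb (xorb (xorb (xorb (xorb (xorb (xorb (xorb (xorb (xorb (xorb (xorb (true) x9) x10) y6) y9) y10) (x0 && x9)) (x0 && x10)) (x0 && y9)) (x0 && y10)) (x6 && x7)) (x6 && x9)) (x6 && x10)) (x6 && y6)) (x6 && y7)) (x6 && y9)) (x6 && y10)) (x9 && y0)) (x11 && y0)) (y0 && y9)) (y0 && y11), xorb (xorb (xorb (xorb (xorb (xorb (xorb (xorb (xorb (xorb (xorb (xorb (xorb (xorb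 (xorb (xorb (xorb (xorb (xorb (xorb (x10) y6) y9) y10) (x0 && x9)) (x0 && x10)) (x0 && y9)) (x0 && y10)) (x6 && x7)) (x6 && x10)) (x6 && y6)) (x6 && y7)) (x6 && y9)) (x6 && y10)) (x7 && x9)) (x9 && y0)) (x9 && y6)) (x9 && y7)) (x11 && y0)) (y0 && y9)) (y0 && y11), xorb (xorb (xorb (xorb (xorb (xorb (xorb (xorb (xorb (xorb (xorb (xorb (xorb (xorb (xorb (xorb (xorb (xorb (xorb (xorb (xorb (xorb (xorb (xorb (x9) x10) y8) y9) (x0 && x9)) (x0 && x10)) (x0 && y9)) (x2 && y10)) (x3 && y10)) (x5 && y10)) (x6 && x7)) (x6 && x9)) (x6 && x10)) (x6 && y9)) (x8 && y6)) (x8 && y7)) (x8 && y10)) (x9 && y0)) (x11 && y0)) (y0 && y11)) (y2 && y9)) (y3 && y9)) (y5 && y9)) (y6 && y9)) (y8 && y9)), (xorb (xorb (xorb (xorb (xorb (xorb (xorb (xorb (xorb (x11) y9) y11) (x6 && x9)) (x7 && x9)) (x9 && y6)) (x9 && y7)) (x9 && y9)) (x11 && y9)) (y9 && y11), xorb (xorb (xorb (xorb (xorb (xorb (xorb (xorb (y9) y11) (x9 && y6)) (x9 && y7)) (x9 && y10)) (x11 && y6)) (x11 && y7)) (x11 && y10)) (y9 && y11), xorb (xorb (xorb (xorb (xorb (xorb (xorb (xorb (x11) (x6 && x9)) (x7 && x9)) (x9 && y9)) (x9 && y10)) (x11 && y6)) (x11 && y7)) (x11 && y9)) (x11 && y1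0))))).

Lemma mfastE N1 N2 : mexpr gB (connof N1 N2) (nsig N1 N2) = mfast N1 N2.
Proof. move: N1 N2. bsolve. Qed.

Lemma fT2AP {P : T2 -> Alg -> bool} : fT (fun t => fA (fun a => P t a)) -> forall t a, P t a.
Proof. move=> H t a. have := fTP H t. cbv beta. move/fAP. by apply. Qed.
Lemma fO2AP {P : Om1 -> Alg -> bool} : fO (fun t => fA (fun a => P t a)) -> forall t a, P t a.
Proof. move=> H t a. have := fOP H t. cbv beta. move/fAP. by apply. Qed.

Definition bigQ N1 N2 :=
   if eqA (wedge N2) azero then (if eqT3 (mfast N1 N2) t3zero then
   [|| eqT N1_1 N1 && eqT N2_1 N2, eqT N1_2 N1 && eqT N2_2 N2,
       eqT N1_3 N1 && eqT N2_3 N2 | eqT N1_4 N1 && eqT N2_4 N2] else true) else true.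
Definition bigP N1 := if eqA (wedge N1) azero then fT (bigQ N1) else true.
Definition bigcheck := fT bigP.
Lemma bigcheck_ok : fT bigP.
Proof. vm_compute. reflexivity. Qed.

Lemma bigcheck_use N1 N2 : eqA (wedge N1) azero -> eqA (wedge N2) azero ->
  eqT3 (mfast N1 N2) t3zero ->
  [|| eqT N1_1 N1 && eqT N2_1 N2, eqT N1_2 N1 && eqT N2_2 N2,
       eqT N1_3 N1 && eqT N2_3 N2 | eqT N1_4 N1 && eqT N2_4 N2].
Proof.
move=> h1 h2 h3. have := @fTP bigP bigcheck_ok N1. rewrite /bigP h1.
move=> /(@fTP (bigQ N1)) /(_ N2). rewrite /bigQ h2 h3. move=> H; exact H.
Qed.

Lemma mc_ext g n n' s s' : metric_compatible g n s -> (forall u, n u = n' u) ->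
  (forall t, s t = s' t) -> metric_compatible g n' s'.
Proof. move=> H Hn Hs. rewrite /metric_compatible -H /sigma_id. by rewrite !Hn !Hs. Qed.

Lemma qlc_nec n : QLC gB n -> [/\ left_connection n, eqA (wedge (n om1)) azero,
  eqA (wedge (n om2)) azero & eqT3 (mfast (n om1) (n om2)) t3zero].
Proof.
case=> Hlc [s [Hbm Hrl Htf Hmc]].
have Hn := conn_decomp Hlc.
have Hs := sig_decomp Hbm.
have e u a E : tens u (dA a) = E -> s E = t2add (t2rmul (n u) a) (n (ormul u a)).
  by move=> <-; rewrite Hrl t2add_cancel.
have e11 : tens om1 (dA ax) = E11 by [].
have e12 : tens om1 (dA ay) = E12 by [].
have e21 : tens om2 (dA ax) = E21 by [].
have e22 : tens om2 (dA ay) = E22 by [].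
have Hs' : forall t, s t = nsig (n om1) (n om2) t.
  move=> t; rewrite Hs (e _ _ _ e11) (e _ _ _ e12) (e _ _ _ e21) (e _ _ _ e22).
  by rewrite /nsig /S11 /S12 /S21 /S22 -!Hn.
have Hm := mc_ext Hmc Hn Hs'.
split; [exact: Hlc | by rewrite Htf | by rewrite Htf | ].
rewrite -mfastE.
have -> : mexpr gB (connof (n om1) (n om2)) (nsig (n om1) (n om2)) = t3zero := Hm.
exact: eqT3_refl.
Qed.

Lemma qlc_uniq n : QLC gB n ->
  same_conn n (connof N1_1 N2_1) \/ same_conn n (connof N1_2 N2_2) \/
  same_conn n (connof N1_3 N2_3) \/ same_conn n (connof N1_4 N2_4).
Proof.
move=> /qlc_nec [Hlc h1 h2 h3].
have D := conn_decomp Hlc.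
case/or4P: (bigcheck_use h1 h2 h3) => /andP [/eqTP e1 /eqTP e2].
- by left => eta; rewrite D -e1 -e2.
- by right; left => eta; rewrite D -e1 -e2.
- by right; right; left => eta; rewrite D -e1 -e2.
- by right; right; right => eta; rewrite D -e1 -e2.
Qed.

Definition qlc_b N1 N2 : bool :=
  let a := S11 N1 N2 in let b := S12 N1 N2 in let c := S21 N1 N2 in let d := S22 N1 N2 in
  let s := sig a b c d in
  if fT (fun t => fA (fun x => eqT (s (t2rmul t x)) (t2rmul (s t) x))) then
  if fO (fun u => fA (fun x => eqT (connof N1 N2 (ormul u x))
                                   (t2add (t2rmul (connof N1 N2 u) x) (s (tens u (dA x)))))) then
  if fO (fun u => eqA (wedge (connof N1 N2 u)) (dOm1 u)) then eqT3 (mfast N1 N2) t3zero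
  else false else false else false.

Lemma qlc_suff N1 N2 : qlc_b N1 N2 -> QLC gB (connof N1 N2).
Proof.
move=> H.
have : [&& fT (fun t => fA (fun x => eqT (nsig N1 N2 (t2rmul t x)) (t2rmul (nsig N1 N2 t) x))),
   fO (fun u => fA (fun x => eqT (connof N1 N2 (ormul u x))
                  (t2add (t2rmul (connof N1 N2 u) x) (nsig N1 N2 (tens u (dA x)))))),
   fO (fun u => eqA (wedge (connof N1 N2 u)) (dOm1 u)) &
   eqT3 (mfast N1 N2) t3zero] := H.
case/and4P => hA hB hC hD.
split; first by split; [exact: connof_add | exact: connof_scal].
exists (nsig N1 N2); split.
- split; [exact: sig_add | exact: sig_scal | ].
  by move=> t x; apply/eqTP; exact: (fT2AP hA t x).
- by move=> u x; apply/eqTP; exact: (fO2AP hB u x).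
- by move=> u; apply/eqAP; exact: (fOP hC u).
- change (mexpr gB (connof N1 N2) (nsig N1 N2) = t3zero).
  by rewrite mfastE; apply/eqT3P.
Qed.

Lemma qlc1 : qlc_b N1_1 N2_1. Proof. vm_compute. reflexivity. Qed.
Lemma qlc2 : qlc_b N1_2 N2_2. Proof. vm_compute. reflexivity. Qed.
Lemma qlc3 : qlc_b N1_3 N2_3. Proof. vm_compute. reflexivity. Qed.
Lemma qlc4 : qlc_b N1_4 N2_4. Proof. vm_compute. reflexivity. Qed.

Lemma nsame N1 N2 M1 M2 : ~~ eqT (connof N1 N2 om1) (connof M1 M2 om1) ->
  ~ same_conn (connof N1 N2) (connof M1 M2).
Proof. move=> /negP h H; apply: h; rewrite H; exact: eqT_refl. Qed.

Definition flat_b N1 N2 := fO (fun eta => eqO (curvature (connof N1 N2) eta) ozero).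
Lemma flat_suff N1 N2 : flat_b N1 N2 -> flat (connof N1 N2).
Proof. rewrite /flat_b => H eta; apply/eqOP; exact: (fOP H eta). Qed.
Definition vol_b N1 N2 := fO (fun eta => eqO (curvature (connof N1 N2) eta) (Vol_tens eta)).
Lemma vol_suff N1 N2 : vol_b N1 N2 -> forall eta, curvature (connof N1 N2) eta = Vol_tens eta.
Proof. rewrite /vol_b => H eta; apply/eqOP; exact: (fOP H eta). Qed.

Definition inv_b g p q r w : bool :=
  if fO (fun eta => eqO (prof p q r w (tens eta g.1), prof p q r w (tens eta g.2)) eta) then
  fO (fun eta => eqO (oadd (ormul g.1 (prof p q r w (tens om1 eta)))
                           (ormul g.2 (prof p q r w (tens om2 eta)))) eta)
  else false.

Lemma inv_nec g pr : metric_inverse g pr -> inv_b g (pr E11) (pr E12) (pr E21) (pr E22).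
Proof.
case=> Hb H1 H2. have D := pr_decomp Hb.
change (fO (fun eta => eqO (prof (pr E11) (pr E12) (pr E21) (pr E22) (tens eta g.1),
         prof (pr E11) (pr E12) (pr E21) (pr E22) (tens eta g.2)) eta) &&
  fO (fun eta => eqO (oadd (ormul g.1 (prof (pr E11) (pr E12) (pr E21) (pr E22) (tens om1 eta)))
                           (ormul g.2 (prof (pr E11) (pr E12) (pr E21) (pr E22) (tens om2 eta)))) eta)).
apply/andP; split; apply: fOI => eta; rewrite -!D.
- by rewrite H1 eqO_refl.
- by rewrite H2 eqO_refl.
Qed.

Definition rlin_b p q r w :=
  fT (fun t => fA (fun a => eqA (prof p q r w (t2rmul t a)) (amul (prof p q r w t) a))).

Lemma inv_suff g p q r w : inv_b g p q r w -> rlin_b p q r w -> metric_inverse g (prof p q r w).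
Proof.
move=> H hr.
have /andP [h1 h2] : fO (fun eta => eqO (prof p q r w (tens eta g.1), prof p q r w (tens eta g.2)) eta) &&
  fO (fun eta => eqO (oadd (ormul g.1 (prof p q r w (tens om1 eta)))
                           (ormul g.2 (prof p q r w (tens om2 eta)))) eta) := H.
split.
- split; [exact: prof_add | exact: prof_scal | ].
  by move: hr; rewrite /rlin_b => hr t a; apply/eqAP; exact: (fT2AP hr t a).
- by move=> eta; apply/eqOP; exact: (fOP h1 eta).
- by move=> eta; apply/eqOP; exact: (fOP h2 eta).
Qed.

Definition P11 : Alg := (true,true,false).
Definition P12 : Alg := (false,true,true).
Definition P21 : Alg := (false,true,true).
Definition P22 : Alg := (true,false,true).

Lemma invB : inv_b gB P11 P12 P21 P22. Proof. vm_compute. reflexivity. Qed.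
Lemma rlinB : rlin_b P11 P12 P21 P22. Proof. vm_compute. reflexivity. Qed.

Definition p1P g :=
  if fA (fun a => eqT (t2scal a g) (t2rmul g a)) then
  if eqA (wedge g) azero then
  (if eqT g gB then true else fA4 (fun p q r w => ~~ inv_b g p q r w)) else true else true.
Definition p1_b := fT p1P.
Lemma p1_ok : fT p1P. Proof. vm_compute. reflexivity. Qed.

Lemma p1_use g : fA (fun a => eqT (t2scal a g) (t2rmul g a)) -> eqA (wedge g) azero ->
  eqT g gB || fA4 (fun p q r w => ~~ inv_b g p q r w).
Proof.
move=> h1 h2. have := @fTP p1P p1_ok g. rewrite /p1P h1 h2.
by case: (eqT g gB).
Qed.

Definition lapP p q r w :=
  if inv_b gB p q r w then
    (if eqA (prof p q r w gB) azero then
     fA (fun a => [&& eqA (prof p q r w (connof N1_1 N2_1 (dA a))) azero,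
                      eqA (prof p q r w (connof N1_2 N2_2 (dA a))) azero,
                      eqA (prof p q r w (connof N1_3 N2_3 (dA a))) azero &
                      eqA (prof p q r w (connof N1_4 N2_4 (dA a))) azero])
     else false)
  else true.
Definition lap_b := fA4 lapP.
Lemma lap_ok : fA4 lapP. Proof. vm_compute. reflexivity. Qed.

Theorem mainTheorem7 :
  (forall g : T2,
     (invertible_metric g /\ central g /\ quantum_symmetric g) <-> g = gB) /\
  exists n1 n2 n3 n4 : Om1 -> T2,
    [/\ QLC gB n1 /\ QLC gB n2 /\ QLC gB n3 /\ QLC gB n4,
        ~ same_conn n1 n2 /\ ~ same_conn n1 n3 /\ ~ same_conn n1 n4 /\
        ~ same_conn n2 n3 /\ ~ same_conn n2 n4 /\ ~ same_conn n3 n4,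
        (forall n, QLC gB n ->
           same_conn n n1 \/ same_conn n n2 \/ same_conn n n3 \/ same_conn n n4),
        flat n1 /\ flat n2 /\ flat n3 /\
          (forall eta : Om1, curvature n4 eta = Vol_tens eta)
      & forall pr : T2 -> Alg, metric_inverse gB pr ->
          pr gB = azero /\
          (forall a : Alg,
             [/\ laplacian pr n1 a = azero, laplacian pr n2 a = azero,
                 laplacian pr n3 a = azero & laplacian pr n4 a = azero])].
Proof.
split.
  move=> g; split.
    case=> [[pr Hpr] [Hc Hq]].
    have hc : fA (fun a => eqT (t2scal a g) (t2rmul g a)).
      by apply: fAI => a; rewrite Hc eqT_refl.
    have hq : eqA (wedge g) azero.
      by have -> : wedge g = azero := Hq; exact: eqA_refl.
    case/orP: (p1_use hc hq) => [/eqTP // | H].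
    exfalso. have := fA4P H (pr E11) (pr E12) (pr E21) (pr E22). cbv beta.
    by rewrite (inv_nec Hpr).
  move=> ->; split; last split.
  - exists (prof P11 P12 P21 P22); exact: inv_suff invB rlinB.
  - move=> a; apply/eqTP; move: a; apply: fAP; vm_compute; reflexivity.
  - rewrite /quantum_symmetric; vm_compute; reflexivity.
exists (connof N1_1 N2_1), (connof N1_2 N2_2), (connof N1_3 N2_3), (connof N1_4 N2_4).
split.
- split; [exact: qlc_suff qlc1 | split; [exact: qlc_suff qlc2 |
    split; [exact: qlc_suff qlc3 | exact: qlc_suff qlc4]]].
- do !split; apply: nsame; vm_compute; reflexivity.
- exact: qlc_uniq.
- split; [apply: flat_suff; vm_compute; reflexivity|].
  split; [apply: flat_suff; vm_compute; reflexivity|].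
  split; [apply: flat_suff; vm_compute; reflexivity|].
  apply: vol_suff; vm_compute; reflexivity.
- move=> pr Hpr.
  have D : forall t, pr t = prof (pr E11) (pr E12) (pr E21) (pr E22) t.
    by case: Hpr => Hb _ _; exact: pr_decomp.
  have := @fA4P lapP lap_ok (pr E11) (pr E12) (pr E21) (pr E22). rewrite /lapP.
  rewrite (inv_nec Hpr).
  case Hg : (eqA _ azero) => // hA.
  split; first by rewrite D; exact/eqAP.
  move=> a. have := fAP hA a. cbv beta.
  case/and4P => q1 q2 q3 q4.
  by split; rewrite /laplacian D; exact/eqAP.
Qed.
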